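(* For every $\forall^+$ type $P$, $I\ \llbracket P\cdot P\to P\rrbracket_e\ I$; equivalently, whenever $x\,\llbracket P\rrbracket_e\,y$ and $y\,\llbracket P\rrbracket_e\,z$, also $x\,\llbracket P\rrbracket_e\,z$.
   Context: Terms are those of the pure untyped $\lambda$-calculus, up to $\alpha$-equivalence; $=_{\beta\eta}$ is $\beta\eta$-convertibility; $I:=\lambda x.x$. Relational types: $R ::= X \mid R\to R' \mid \forall X.R \mid R^{\cup} \mid R\cdot R' \mid t$ (last form: promotion of a term). A relation on terms is $\beta\eta$-closed if closed under replacing either related term by a $\beta\eta$-equal one; $\mathcal{R}$ is the set of such relations; environments map type variables to $\mathcal{R}$. Interpretation: $\llbracket X\rrbracket_\gamma=\gamma(X)$; $t\,\llbracket R\to R'\rrbracket_\gamma\,t'$ iff for all $a,a'$ with $a\,\llbracket R\rrbracket_\gamma\,a'$, $t\,a\,\llbracket R'\rrbracket_\gamma\,t'\,a'$; $\llbracket \forall X.R\rrbracket_\gamma=\bigcap_{r\in\mathcal{R}}\llbracket R\rrbracket_{\gamma[X\mapsto r]}$; $t\,\llbracket R^\cup\rrbracket_\gamma\,t'$ iff $t'\,\llbracket R\rrbracket_\gamma\,t$; $t\,\llbracket R\cdot R'\rrbracket_\gamma\,t'$ iff $\exists t''$, $t\,\llbracket R\rrbracket_\gamma\,t''$ and $t''\,\llbracket R'\rrbracket_\gamma\,t'$; $\llbracket \hat t\rrbracket_\gamma=\{(t,t')\mid \hat t\,t=_{\beta\eta}t'\}$. $e$ is the environment mapping every type variable to $=_{\beta\eta}$.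 Polarities $p\in\{+,-\}$, $\bar p$ the other; the property $\forall^p$: type variables are $\forall^p$; if $R$ is $\forall^{\bar p}$ and $R'$ is $\forall^p$ then $R\to R'$ is $\forall^p$; if $R$ is $\forall^+$ then $\forall X.R$ is $\forall^+$; if $R$ is $\forall^p$ then so is $R^\cup$; a promotion of $t$ with $t=_{\beta\eta}I$ is $\forall^p$. *)

(* Defs.v *)
(* Untyped lambda-calculus (de Bruijn indices, so terms are
   automatically up to alpha-equivalence), beta-eta convertibility, relational
   types and their interpretation. *)
From Stdlib Require Import Relations Arith.

Inductive term : Type :=
| Var : nat -> term
| App : term -> term -> term
| Lam : term -> term.

Fixpoint lift (c : nat) (t : term) : term :=
  match t with
  | Var n => if Nat.leb c n then Var (S n) else Var n
  | App a b => App (lift c a) (lift c b)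
  | Lam a => Lam (lift (S c) a)
  end.

Fixpoint subst (k : nat) (u : term) (t : term) : term :=
  match t with
  | Var n => if Nat.eqb n k then u
             else if Nat.ltb k n then Var (pred n) else Var n
  | App a b => App (subst k u a) (subst k u b)
  | Lam a => Lam (subst (S k) (lift 0 u) a)
  end.

Inductive step : term -> term -> Prop :=
| step_beta : forall t u, step (App (Lam t) u) (subst 0 u t)
| step_eta : forall t, step (Lam (App (lift 0 t) (Var 0))) t
| step_appl : forall a a' b, step a a' -> step (App a b) (App a' b)
| step_appr : forall a b b', step b b' -> step (App a b) (App a b')
| step_lam : forall a a', step a a' -> step (Lam a) (Lam a').

Definition beq : term -> term -> Prop := clos_refl_sym_trans term step.

Definition I : term := Lam (Var 0).

Inductive rtype : Type :=
| RVar : nat -> rtype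
| RArrow : rtype -> rtype -> rtype
| RForall : nat -> rtype -> rtype
| RConv : rtype -> rtype
| RComp : rtype -> rtype -> rtype
| RProm : term -> rtype.

Definition rel := term -> term -> Prop.

Definition betaeta_closed (r : rel) : Prop :=
  forall t1 t1' t2 t2', beq t1 t1' -> beq t2 t2' -> r t1 t2 -> r t1' t2'.

Definition env := nat -> rel.

Definition env_upd (g : env) (X : nat) (r : rel) : env :=
  fun Y => if Nat.eqb Y X then r else g Y.

Fixpoint interp (R : rtype) (g : env) : rel :=
  match R with
  | RVar X => g X
  | RArrow R1 R2 => fun t t' =>
      forall a a', interp R1 g a a' -> interp R2 g (App t a) (App t' a')
  | RForall X R1 => fun t t' =>
      forall r : rel, betaeta_closed r -> interp R1 (env_upd g X r) t t'
  | RConv R1 => fun t t' => interp R1 g t' t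
  | RComp R1 R2 => fun t t' =>
      exists t'', interp R1 g t t'' /\ interp R2 g t'' t'
  | RProm s => fun t t' => beq (App s t) t'
  end.

Definition e : env := fun _ => beq.

(** Polarities: [true] = +, [false] = -.  [forallp p R] is the property
    "R is forall^p". *)
Inductive forallp : bool -> rtype -> Prop :=
| fp_var : forall p X, forallp p (RVar X)
| fp_arrow : forall p R R', forallp (negb p) R -> forallp p R' ->
    forallp p (RArrow R R')
| fp_forall : forall X R, forallp true R -> forallp true (RForall X R)
| fp_conv : forall p R, forallp p R -> forallp p (RConv R)
| fp_prom : forall p t, beq t I -> forallp p (RProm t).

(* Main.v *)
Require Import Defs.
From Stdlib Require Import Relations Arith Lia FunctionalExtensionality.

Ltac nat_cases :=
  repeat match goal with
  | |- context [Nat.leb ?a ?b] => destruct (Nat.leb_spec a b)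
  | |- context [Nat.eqb ?a ?b] => destruct (Nat.eqb_spec a b)
  | |- context [Nat.ltb ?a ?b] => destruct (Nat.ltb_spec a b)
  end.

Lemma lift_lift : forall t c d, d <= c -> lift (S c) (lift d t) = lift d (lift c t).
Proof.
  induction t; intros c d Hd; cbn [lift subst].
  - nat_cases; cbn [lift subst]; nat_cases; try lia; reflexivity.
  - rewrite IHt1, IHt2 by lia; reflexivity.
  - rewrite IHt by lia; reflexivity.
Qed.

Lemma lift_subst : forall t c k u, k <= c ->
  lift c (subst k u t) = subst k (lift c u) (lift (S c) t).
Proof.
  induction t; intros c k u Hk; cbn [lift subst].
  - nat_cases; cbn [lift subst]; nat_cases; cbn [lift subst]; nat_cases; try lia; try reflexivity;
      f_equal; lia.
  - rewrite IHt1, IHt2 by lia; reflexivity.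
  - rewrite IHt by lia. rewrite lift_lift by lia. reflexivity.
Qed.

Lemma subst_lift_id : forall t k u, subst k u (lift k t) = t.
Proof.
  induction t; intros k u; cbn [lift subst].
  - nat_cases; cbn [lift subst]; nat_cases; try lia; try reflexivity.
  - rewrite IHt1, IHt2; reflexivity.
  - rewrite IHt; reflexivity.
Qed.

Lemma subst_lift_comm : forall t c j w, c <= j ->
  subst (S j) (lift c w) (lift c t) = lift c (subst j w t).
Proof.
  induction t; intros c j w Hc; cbn [lift subst].
  - nat_cases; cbn [lift subst]; nat_cases; cbn [lift subst]; nat_cases; try lia; try reflexivity;
      f_equal; lia.
  - rewrite IHt1, IHt2 by lia; reflexivity.
  - rewrite <- lift_lift by lia. rewrite IHt by lia. reflexivity.
Qed.

Lemma subst_subst : forall t k j u w, k <= j ->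
  subst j w (subst k u t) = subst k (subst j w u) (subst (S j) (lift k w) t).
Proof.
  induction t; intros k j u w Hk; cbn [lift subst].
  - nat_cases; cbn [lift subst]; nat_cases; cbn [lift subst]; nat_cases; try lia; try reflexivity;
      try (rewrite subst_lift_id; reflexivity); f_equal; lia.
  - rewrite IHt1, IHt2 by lia; reflexivity.
  - rewrite IHt by lia. rewrite subst_lift_comm by lia.
    rewrite lift_lift by lia. reflexivity.
Qed.

Lemma step_lift : forall u v, step u v -> forall c, step (lift c u) (lift c v).
Proof.
  induction 1; intros c; cbn [lift subst].
  - rewrite lift_subst by lia. constructor.
  - rewrite lift_lift by lia. constructor.
  - constructor; auto.
  - constructor; auto.
  - constructor; auto.
Qed.

Lemma step_subst : forall u v, step u v -> forall j w, step (subst j w u) (subst j w v).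
Proof.
  induction 1; intros j w; cbn [lift subst].
  - rewrite (subst_subst t 0 j) by lia. constructor.
  - rewrite subst_lift_comm by lia. constructor.
  - constructor; auto.
  - constructor; auto.
  - constructor; auto.
Qed.

Lemma beq_map : forall f : term -> term, (forall x y, step x y -> step (f x) (f y)) ->
  forall x y, beq x y -> beq (f x) (f y).
Proof.
  intros f Hf x y H; induction H.
  - apply rst_step; auto.
  - apply rst_refl.
  - apply rst_sym; auto.
  - eapply rst_trans; eauto.
Qed.

Lemma beq_refl : forall x, beq x x. Proof. intros; apply rst_refl. Qed.
Lemma beq_sym : forall x y, beq x y -> beq y x. Proof. intros; apply rst_sym; auto. Qed.
Lemma beq_trans : forall x y z, beq x y -> beq y z -> beq x z.
Proof. intros; eapply rst_trans; eauto. Qed.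

Lemma beq_appl : forall a a' b, beq a a' -> beq (App a b) (App a' b).
Proof. intros a a' b; apply (beq_map (fun x => App x b)); intros; constructor; auto. Qed.
Lemma beq_appr : forall a b b', beq b b' -> beq (App a b) (App a b').
Proof. intros a b b'; apply (beq_map (fun x => App a x)); intros; constructor; auto. Qed.
Lemma beq_app : forall a a' b b', beq a a' -> beq b b' -> beq (App a b) (App a' b').
Proof. intros; eapply beq_trans; [apply beq_appl; eauto | apply beq_appr; eauto]. Qed.
Lemma beq_lam : forall a a', beq a a' -> beq (Lam a) (Lam a').
Proof. intros a a'; apply (beq_map Lam); intros; constructor; auto. Qed.

Fixpoint fv_ok (k : nat) (t : term) : Prop :=
  match t with
  | Var n => n < k
  | App a b => fv_ok k a /\ fv_ok k b
  | Lam a => fv_ok (S k) a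
  end.

Lemma fv_ok_mono : forall t k k', k <= k' -> fv_ok k t -> fv_ok k' t.
Proof.
  induction t; simpl; intros k k' Hk H.
  - lia.
  - destruct H; split; eauto.
  - apply (IHt (S k)); auto; lia.
Qed.

Lemma fv_ok_ex : forall t, exists k, fv_ok k t.
Proof.
  induction t; simpl.
  - exists (S n); lia.
  - destruct IHt1 as [k1 H1], IHt2 as [k2 H2]. exists (k1 + k2).
    split; [apply (fv_ok_mono _ k1) | apply (fv_ok_mono _ k2)]; auto; lia.
  - destruct IHt as [k H]. exists k. apply (fv_ok_mono _ k); auto.
Qed.

Lemma fv_ok_lift : forall t k c, fv_ok k t -> fv_ok (S k) (lift c t).
Proof.
  induction t; simpl; intros k c H.
  - nat_cases; simpl; lia.
  - destruct H; split; auto.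
  - auto.
Qed.

Lemma subst_fv_ok : forall t k u, fv_ok k t -> subst k u t = t.
Proof.
  induction t; simpl; intros k u H.
  - nat_cases; try lia; reflexivity.
  - destruct H; rewrite IHt1, IHt2; auto.
  - rewrite IHt; auto.
Qed.

Lemma extensionality : forall t t', (forall a, beq (App t a) (App t' a)) -> beq t t'.
Proof.
  intros t t' H.
  destruct (fv_ok_ex t) as [k1 H1]. destruct (fv_ok_ex t') as [k2 H2].
  set (k := k1 + k2).
  assert (F1 : fv_ok k t) by (apply (fv_ok_mono _ k1); auto; unfold k; lia).
  assert (F2 : fv_ok k t') by (apply (fv_ok_mono _ k2); auto; unfold k; lia).
  specialize (H (Var k)).
  apply (beq_map (lift 0)) in H; [| intros; apply step_lift; auto].
  apply (beq_map (subst (S k) (Var 0))) in H; [| intros; apply step_subst; auto].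
  cbn [lift subst] in H. replace (0 <=? k) with true in H by reflexivity. cbn [subst] in H. rewrite Nat.eqb_refl in H.
  rewrite !subst_fv_ok in H by (apply fv_ok_lift; auto).
  apply beq_lam in H.
  eapply beq_trans; [apply beq_sym, rst_step, step_eta |].
  eapply beq_trans; [exact H | apply rst_step, step_eta].
Qed.

Lemma interp_closed : forall R g, (forall X, betaeta_closed (g X)) ->
  betaeta_closed (interp R g).
Proof.
  induction R; intros g Hg t1 t1' t2 t2' E1 E2 H; simpl in *.
  - eapply Hg; eauto.
  - intros a a' Ha. eapply IHR2; [auto | apply beq_appl; eauto | apply beq_appl; eauto | auto].
  - intros r Hr. eapply IHR; [| eauto | eauto | auto].
    intros Y; unfold env_upd; destruct (Nat.eqb Y n); auto.
  - eapply IHR; eauto.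
  - destruct H as [t'' [Ha Hb]]. exists t''. split.
    + eapply IHR1; eauto using beq_refl.
    + eapply IHR2; eauto using beq_refl.
  - eapply beq_trans; [apply beq_appr, beq_sym; eauto |].
    eapply beq_trans; eauto.
Qed.

Lemma e_closed : forall X, betaeta_closed (e X).
Proof.
  intros X t1 t1' t2 t2' E1 E2 H; unfold e in *.
  eapply beq_trans; [apply beq_sym; eauto |]. eapply beq_trans; eauto.
Qed.

Lemma beq_closed : betaeta_closed beq.
Proof. exact (e_closed 0). Qed.

Lemma beq_I : forall t, beq (App I t) t.
Proof. intros; apply rst_step. exact (step_beta (Var 0) t). Qed.

Lemma main_lemma : forall p R, forallp p R ->
  (p = true -> forall t t', interp R e t t' -> beq t t') /\
  (p = false -> forall t t', beq t t' -> interp R e t t').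
Proof.
  induction 1.
  - simpl; unfold e; split; auto.
  - destruct IHforallp1 as [A1 B1], IHforallp2 as [A2 B2].
    split; intros Hp; subst p; simpl in *.
    + intros t t' H1. apply extensionality. intros a.
      apply A2; auto. apply H1. apply B1; auto. apply beq_refl.
    + intros t t' H1 a a' Ha. apply B2; auto. apply beq_app; auto.
  - destruct IHforallp as [A B]. split; intros Hp; [| discriminate].
    intros t t' H1. simpl in H1. specialize (H1 beq beq_closed).
    assert (Eq : env_upd e X beq = e).
    { apply functional_extensionality; intros Y; unfold env_upd, e.
      destruct (Nat.eqb Y X); auto. }
    rewrite Eq in H1. auto.
  - destruct IHforallp as [A B]. simpl. split; intros Hp t t' H1.
    + apply beq_sym; auto.
    + apply B; auto; apply beq_sym; auto.
  - simpl. assert (K : forall u, beq (App t u) u).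
    { intros u. eapply beq_trans; [apply beq_appl; eauto | apply beq_I]. }
    split; intros Hp u u' H1.
    + eapply beq_trans; [apply beq_sym, K | auto].
    + eapply beq_trans; [apply K | auto].
Qed.

Theorem mainTheorem11 :
  forall P : rtype, forallp true P ->
    interp (RArrow (RComp P P) P) e I I /\
    (forall x y z : term, interp P e x y -> interp P e y z -> interp P e x z).
Proof.
  intros P HP.
  destruct (main_lemma _ _ HP) as [A _].
  assert (T : forall x y z : term, interp P e x y -> interp P e y z -> interp P e x z).
  { intros x y z H1 H2. eapply (interp_closed P e e_closed y x z z);
      [apply beq_sym, A; auto | apply beq_refl | auto]. }
  split; [| exact T].
  simpl. intros a a' [a'' [H1 H2]].
  eapply (interp_closed P e e_closed a (App I a) a' (App I a'));
    [apply beq_sym, beq_I | apply beq_sym, beq_I | eauto].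
Qed.
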